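(* Let $I=[a,b]$, $a=x_0<x_1<\cdots<x_N=b$, $I_n=[x_{n-1},x_n]$, $Y_0,\dots,Y_N\in\mathcal{K}(\mathbb{R})$, and let $L_n,\Omega_n$ ($n=1,\dots,N$) be as follows: $L_n:I\to I_n$ is a homeomorphism with $L_n(x_0)=x_{n-1}$, $L_n(x_N)=x_n$, $|L_n(x)-L_n(y)|\le\gamma_n|x-y|$ with $0<\gamma_n<1$; $\Omega_n:I\times\mathcal{K}(\mathbb{R})\to\mathcal{K}(\mathbb{R})$ is continuous with $\Omega_n(x_0,Y_0)=Y_{n-1}$, $\Omega_n(x_N,Y_N)=Y_n$ and $\mathfrak{H}(\Omega_n(x,Y),\Omega_n(x,Y_* ))\le\phi_n(\mathfrak{H}(Y,Y_* ))$ with $\phi_n:\mathbb{R}_+\to\mathbb{R}_+$ increasing and $\phi_n(t)/t<1$ decreasing for $t>0$. Let $\mathcal{J}$ be the IFS $\{I\times\mathcal{K}(\mathbb{R});\mathcal{W}_n(x,Y)=(L_n(x),\Omega_n(x,Y)),\ n=1,\dots,N\}$ with attractor the graph $\mathcal{G}_*(f)$ of the associated continuous fractal function $f:I\to\mathcal{K}(\mathbb{R})$. Let $p=(p_n)$ and $\tilde p=(\tilde p_n)$ be probability vectors with $p\ne\tilde p$, and let $\mu_p,\mu_{\tilde p}$ be the Borel probability measures on $\mathcal{G}_*(f)$ with $\mu_p=\sum_n p_n\mu_p\circ\mathcal{W}_n^{-1}$ and $\mu_{\tilde p}=\sum_n\tilde p_n\mu_{\tilde p}\circ\mathcal{W}_n^{-1}$.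 Then $\mu_p$ and $\mu_{\tilde p}$ are mutually singular.
   Context: $\mathcal{K}(\mathbb{R})$: non-empty compact subsets of $\mathbb{R}$ with Hausdorff distance $\mathfrak{H}$; $I\times\mathcal{K}(\mathbb{R})$ has metric $d((x,Y),(x_*,Y_* ))=|x-x_*|+\mathfrak{H}(Y,Y_* )$. The fractal function $f$ is the unique continuous $f:I\to\mathcal{K}(\mathbb{R})$ with $f(x_n)=Y_n$ and $f(x)=\Omega_n(L_n^{-1}(x),f(L_n^{-1}(x)))$ for $x\in I_n$; $\mathcal{G}_*(f)=\{(x,f(x)):x\in I\}$. *)

(* Defs.v *)
From HB Require Import structures.
From mathcomp Require Import all_boot all_order all_algebra.
From mathcomp Require Import all_classical all_reals all_analysis.
Set Implicit Arguments. Unset Strict Implicit. Unset Printing Implicit Defensive.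
Import Order.TTheory GRing.Theory Num.Theory.
Import numFieldNormedType.Exports.
Local Open Scope classical_set_scope.
Local Open Scope ring_scope.

Record KR (R : realType) := MkKR {
  kset : set R;
  kset_nonempty : kset !=set0;
  kset_compact : compact kset }.

HB.instance Definition _ (R : realType) := gen_eqMixin (KR R).
HB.instance Definition _ (R : realType) := gen_choiceMixin (KR R).
Definition KR0 (R : realType) : KR R :=
  @MkKR R [set 0] (ex_intro _ 0 (erefl 0 : [set (0:R)] 0)) (@compact_set1 R 0).
HB.instance Definition _ (R : realType) := isPointed.Build (KR R) (KR0 R).

Definition pt_dist (R : realType) (a : R) (B : set R) : R :=
  inf [set `|a - b| | b in B].
Definition hausdorff (R : realType) (A B : KR R) : R :=
  Num.max (sup [set pt_dist a (kset B) | a in kset A])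
          (sup [set pt_dist b (kset A) | b in kset B]).

Definition dprod (R : realType) (z w : R * KR R) : R :=
  `|z.1 - w.1| + hausdorff z.2 w.2.

Definition dopen (R : realType) (U : set (R * KR R)) : Prop :=
  forall z, U z -> exists2 e : R, 0 < e & forall w, dprod z w < e -> U w.
Definition borelRK (R : realType) := g_sigma_algebraType (@dopen R).

Definition dcontinuous_on (R : realType) (D : set (R * KR R))
  (g : R -> KR R -> KR R) : Prop :=
  forall z, D z -> forall e : R, 0 < e -> exists2 del : R, 0 < del &
    forall w, D w -> dprod z w < del -> hausdorff (g z.1 z.2) (g w.1 w.2) < e.

Definition kcontinuous_on (R : realType) (A : set R) (f : R -> KR R) : Prop :=
  forall x, A x -> forall e : R, 0 < e -> exists2 del : R, 0 < del &
    forall y, A y -> `|x - y| < del -> hausdorff (f x) (f y) < e.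

Definition homeo_onto (R : realType) (A B : set R) (L : R -> R) : Prop :=
  [/\ (forall x, A x -> B (L x)),
      (forall y, B y -> exists2 x, A x & L x = y),
      {in A &, injective L},
      {within A, continuous L} &
      (* continuity of the inverse L^{-1} : B -> A *)
      (forall x, A x -> forall e : R, 0 < e -> exists2 del : R, 0 < del &
         forall y, A y -> `|L x - L y| < del -> `|x - y| < e)].

Definition kgraph (R : realType) (a b : R) (f : R -> KR R) : set (R * KR R) :=
  [set z | z.1 \in `[a, b] /\ z.2 = f z.1].

Definition mutually_singular d (T : measurableType d) (R : realType)
  (mu nu : set T -> \bar R) : Prop :=
  exists2 A : set T, measurable A & (mu A = 0%E /\ nu (~` A) = 0%E).

(* Main.v *)
Require Import Defs.
From HB Require Import structures.
From mathcomp Require Import all_boot all_order all_algebra.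
From mathcomp Require Import all_classical all_reals all_analysis.
From mathcomp Require Import ring lra zify.
Import Order.TTheory GRing.Theory Num.Theory.
Import numFieldNormedType.Exports.
Local Open Scope classical_set_scope.
Local Open Scope ring_scope.
Set Implicit Arguments. Unset Strict Implicit. Unset Printing Implicit Defensive.

Section Haus.
Variable R : realType.

Lemma kbound (A : KR R) : exists M : R, forall x, kset A x -> `|x| <= M.
Proof.
case: (compact_bounded (@kset_compact _ A)) => M [_ HM].
exists (M + 1); move=> x Ax; apply: (HM (M+1)); first by rewrite ltrDl.
exact: Ax.
Qed.

Lemma pt_dist_ge0 (a : R) (B : set R) : 0 <= pt_dist a B.
Proof.
rewrite /pt_dist.
have [[y [b Bb _]]|E0] := pselect ([set `|a - b| | b in B] !=set0).
  by apply: lb_le_inf; [exists `|a - b|, b | move=> _ [c _ <-]].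
have -> : [set `|a - b| | b in B] = set0.
  by apply/seteqP; split=> // y Hy; apply: E0; exists y.
by rewrite inf0.
Qed.

Lemma pt_dist_le (a b : R) (B : set R) : B b -> pt_dist a B <= `|a - b|.
Proof.
move=> Bb; rewrite /pt_dist; apply: ge_inf; last by exists b.
by exists 0 => _ [c _ <-].
Qed.

Lemma pt_dist_lt (a e : R) (B : set R) : B !=set0 -> pt_dist a B < e ->
  exists2 b, B b & `|a - b| < e.
Proof.
move=> [b0 Bb0] /inf_lt []; first by exists `|a - b0|, b0.
by move=> _ [b Bb <-] H; exists b.
Qed.

Lemma has_sup_pd (A B : KR R) : has_sup [set pt_dist a (kset B) | a in kset A].
Proof.
case: (@kset_nonempty _ A) => a0 Aa0; case: (@kset_nonempty _ B) => b0 Bb0.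
case: (kbound A) => M HM.
split; first by exists (pt_dist a0 (kset B)), a0.
exists (M + `|b0|) => _ [a Aa <-].
apply: (le_trans (pt_dist_le a Bb0)); apply: (le_trans (ler_normB _ _)).
by rewrite lerD2r HM.
Qed.

Lemma hausdorff_ge0 (A B : KR R) : 0 <= hausdorff A B.
Proof.
rewrite /hausdorff le_max; apply/orP; left.
case: (@kset_nonempty _ A) => a0 Aa0.
apply: (le_trans (pt_dist_ge0 a0 (kset B))).
by apply: sup_upper_bound; [exact: has_sup_pd | exists a0].
Qed.

Lemma hausdorffC (A B : KR R) : hausdorff A B = hausdorff B A.
Proof. by rewrite /hausdorff maxC. Qed.

Lemma hausdorff_lt (A B : KR R) (e : R) a : hausdorff A B < e -> kset A a ->
  exists2 b, kset B b & `|a - b| < e.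
Proof.
move=> He Aa; apply: pt_dist_lt; first exact: (@kset_nonempty _ B).
apply: le_lt_trans He; rewrite /hausdorff le_max; apply/orP; left.
by apply: sup_upper_bound; [exact: has_sup_pd | exists a].
Qed.

Lemma pt_dist_gt0 (c : R) (K : KR R) : ~ kset K c -> 0 < pt_dist c (kset K).
Proof.
move=> Kc.
have cl : closed (kset K) by apply: compact_closed => //; exact: (@kset_compact _ K).
have : open (~` kset K) by rewrite openC.
move=> /[dup] oK; rewrite openE => /(_ c Kc).
rewrite /interior => /nbhs_ballP [e e0 Hb].
apply: (lt_le_trans e0); apply: lb_le_inf.
  by case: (@kset_nonempty _ K) => b Kb; exists `|c - b|, b.
move=> _ [b Kb <-]; rewrite leNgt; apply/negP => Hlt.
by apply: (Hb b) => //; rewrite -ball_normE /=.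
Qed.


Lemma kR_eq (A B : KR R) : kset A = kset B -> A = B.
Proof.
case: A B => [A An Ac] [B Bn Bc] /= AB; subst B.
by rewrite (Prop_irrelevance An Bn) (Prop_irrelevance Ac Bc).
Qed.

Lemma haus_contra (A1 A2 U : KR R) c : kset A1 c -> ~ kset A2 c ->
  hausdorff A1 U < pt_dist c (kset A2) / 3 ->
  hausdorff U A2 < pt_dist c (kset A2) / 3 -> False.
Proof.
move=> A1c A2c H1 H2; set r := pt_dist c (kset A2) in H1 H2.
have r0 : 0 < r by apply: pt_dist_gt0.
have [b Ub cb] := hausdorff_lt H1 A1c.
have [b' A2b' bb'] := hausdorff_lt H2 Ub.
have : r <= `|c - b'| by apply: pt_dist_le.
have : `|c - b'| <= `|c - b| + `|b - b'| by apply: ler_distD.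
move=> h1 h2; have : r < r / 3 + r / 3 by apply: (le_lt_trans h2); apply: (le_lt_trans h1); apply: ltrD.
lra.
Qed.

End Haus.

Section Geo.
Variables (R : realType) (N : nat) (xs : nat -> R) (f : R -> KR R).
Local Notation I := (`[xs 0%N, xs N]).
Local Notation G := (kgraph (xs 0%N) (xs N) f).

Lemma dprod1 (z w : R * KR R) : `|z.1 - w.1| <= dprod z w.
Proof. by rewrite /dprod lerDl hausdorff_ge0. Qed.

Lemma dprod2 (z w : R * KR R) : hausdorff z.2 w.2 <= dprod z w.
Proof. by rewrite /dprod lerDr normr_ge0. Qed.

Lemma dopen_lt (r : R) : dopen [set z : R * KR R | z.1 < r].
Proof.
move=> z /= zr; exists (r - z.1); first by rewrite subr_gt0.
move=> w /(le_lt_trans (dprod1 z w)) h.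
have : w.1 - z.1 <= `|z.1 - w.1| by rewrite distrC ler_norm.
lra.
Qed.

Lemma dopen_gt (r : R) : dopen [set z : R * KR R | r < z.1].
Proof.
move=> z /= zr; exists (z.1 - r); first by rewrite subr_gt0.
move=> w /(le_lt_trans (dprod1 z w)) h.
have : z.1 - w.1 <= `|z.1 - w.1| by rewrite ler_norm.
lra.
Qed.

Lemma G_dopenC : kcontinuous_on [set x | x \in I] f -> dopen (~` G).
Proof.
move=> fc [x Y] /= nG.
have [xI|xI] := boolP (x \in I); last first.
  move: xI; rewrite in_itv /= negb_and -!ltNge => /orP[x0|xN].
    exists (xs 0%N - x); first by rewrite subr_gt0.
    move=> w /(le_lt_trans (dprod1 _ w)) /= h [].
    rewrite in_itv /= => /andP[h1 _] _.
    have : w.1 - x <= `|x - w.1| by rewrite distrC ler_norm.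
    lra.
  exists (x - xs N); first by rewrite subr_gt0.
  move=> w /(le_lt_trans (dprod1 _ w)) /= h [].
  rewrite in_itv /= => /andP[_ h1] _.
  have : x - w.1 <= `|x - w.1| by rewrite ler_norm.
  lra.
have Yf : kset Y <> kset (f x).
  by move=> /kR_eq YE; apply: nG; split.
have [c Hc] : exists c, (kset Y c /\ ~ kset (f x) c) \/ (kset (f x) c /\ ~ kset Y c).
  apply: contrapT => Hn; apply: Yf; apply/funext => c; apply/propext.
  split => Hc; apply: contrapT => Hc'; apply: Hn; exists c; by [left | right].
pose K2 := if `[< kset Y c /\ ~ kset (f x) c >] then f x else Y.
have r0 : 0 < pt_dist c (kset K2) / 3.
  rewrite divr_gt0 // pt_dist_gt0 // /K2; case: asboolP => [[_ h]|Hn]; first exact: h.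
  by case: Hc => [h|[_ h]]; [exfalso; exact: Hn h| exact: h].
have [del del0 Hdel] := fc x xI _ r0.
exists (Num.min del (pt_dist c (kset K2) / 3)); first by rewrite lt_min del0.
move=> [w W] /=; rewrite lt_min => /andP[h1 h2] [/= wI Wf].
have d1 := le_lt_trans (dprod1 (x, Y) (w, W)) h1.
have d2 := le_lt_trans (dprod2 (x, Y) (w, W)) h2.
have Hf := Hdel w wI d1; rewrite /= in d2; subst W.
move: r0 Hf d2; rewrite /K2; case: asboolP => [[Yc fc']|Hn] _ Hf d2.
  apply: (haus_contra Yc fc' d2); by rewrite hausdorffC.
have [fxc Yc] : kset (f x) c /\ ~ kset Y c by case: Hc => // h; exfalso; exact: Hn h.
apply: (haus_contra fxc Yc Hf); by rewrite hausdorffC.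
Qed.

End Geo.

Section Cyl.
Variables (R : realType) (N : nat) (xs : nat -> R) (L : nat -> R -> R).
Local Notation I := (`[xs 0%N, xs N]).
Hypothesis Hxs : forall i, (i < N)%N -> xs i < xs i.+1.
Hypothesis HL : forall n, (0 < n <= N)%N ->
     homeo_onto [set x | x \in I] [set x | x \in `[xs n.-1, xs n]] (L n)
     /\ L n (xs 0%N) = xs n.-1 /\ L n (xs N) = xs n.

Lemma xs_lt i j : (i < j <= N)%N -> xs i < xs j.
Proof.
elim: j => // j IH /andP[ij jN].
have jN' : (j < N)%N by lia.
have [->|ij'] : i = j \/ (i < j)%N by lia.
  exact: Hxs.
apply: (lt_trans (IH _)); first by apply/andP; split; lia.
exact: Hxs.
Qed.

Lemma xs_le i j : (i <= j <= N)%N -> xs i <= xs j.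
Proof.
move=> /andP[]; rewrite leq_eqVlt => /orP[/eqP -> //|ij jN].
by apply/ltW/xs_lt; rewrite ij.
Qed.

Lemma x0N : xs 0%N <= xs N.
Proof. by apply: xs_le; rewrite leqnn. Qed.

Lemma L_mono n : (0 < n <= N)%N -> {in I &, {mono L n : x y / x <= y}}.
Proof.
move=> nN; have [[_ _ Hinj Hc _] [L0 LN]] := HL nN.
apply: segment_continuous_inj_le.
- rewrite L0 LN; apply: xs_le; case/andP: nN => n0 ->.
  by rewrite andbT; case: n n0 {Hinj Hc L0 LN}.
- exact: Hc.
- by move=> x y xI yI; apply: Hinj; rewrite inE.
Qed.

Lemma L_lt n x y : (0 < n <= N)%N -> x \in I -> y \in I -> (L n x < L n y) = (x < y).
Proof. by move=> nN xI yI; rewrite !ltNge (L_mono nN yI xI). Qed.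

Lemma L_in n x : (0 < n <= N)%N -> x \in I -> L n x \in `[xs n.-1, xs n].
Proof. by move=> nN xI; have [[H _ _ _ _] _] := HL nN; have := H x xI; rewrite inE. Qed.

Lemma L_surj n y : (0 < n <= N)%N -> y \in `[xs n.-1, xs n] -> exists2 x, x \in I & L n x = y.
Proof.
move=> nN yI; have [[_ H _ _ _] _] := HL nN; have [x xI <-] := H y yI.
by exists x.
Qed.

Lemma L_inj n x y : (0 < n <= N)%N -> x \in I -> y \in I -> L n x = L n y -> x = y.
Proof. by move=> nN xI yI; have [[_ _ H _ _] _] := HL nN; apply: H; rewrite inE. Qed.

Lemma Iab n y : (0 < n <= N)%N -> y \in `[xs n.-1, xs n] -> y \in I.
Proof.
move=> nN; rewrite !in_itv /= => /andP[h1 h2]; apply/andP; split.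
  by apply: le_trans h1; apply: xs_le; apply/andP; split; lia.
by apply: le_trans h2 _; apply: xs_le; apply/andP; split; lia.
Qed.

Lemma LI n x : (0 < n <= N)%N -> x \in I -> L n x \in I.
Proof. by move=> nN xI; apply: (Iab nN); apply: L_in. Qed.

Definition valid (w : seq nat) := all (fun n => (0 < n <= N)%N) w.
Definition lw (w : seq nat) := foldr (fun n a => L n a) (xs 0%N) w.
Definition rw (w : seq nat) := foldr (fun n a => L n a) (xs N) w.
Definition S (w : seq nat) := [set x | lw w <= x < rw w].

Lemma x0I : xs 0%N \in I.
Proof. by rewrite in_itv /= lexx x0N. Qed.
Lemma xNI : xs N \in I.
Proof. by rewrite in_itv /= lexx x0N. Qed.

Lemma N0 : (0 < N)%N -> xs 0%N < xs N.
Proof. by move=> N0; apply: xs_lt; rewrite N0 leqnn. Qed.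

Lemma lrI w : (0 < N)%N -> valid w -> [/\ lw w \in I, rw w \in I & lw w < rw w].
Proof.
move=> Npos; elim: w => [|n w IH] /=; first by split; [exact: x0I|exact: xNI|exact: N0].
move=> /andP[nN vw]; have [lI rI lr] := IH vw.
by split; [exact: LI|exact: LI|rewrite L_lt].
Qed.

Lemma S_cons n w x : (0 < N)%N -> (0 < n <= N)%N -> valid w -> x \in I ->
  S (n :: w) (L n x) <-> S w x.
Proof.
move=> Npos nN vw xI; have [lI rI _] := lrI Npos vw.
by rewrite /S /= !L_lt // (L_mono nN).
Qed.

Lemma S_sub n w y : (0 < N)%N -> (0 < n <= N)%N -> valid w -> S (n :: w) y ->
  xs n.-1 <= y < xs n.
Proof.
move=> Npos nN vw /andP[h1 h2]; have [lI rI _] := lrI Npos vw.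
have [_ [L0 LN]] := HL nN.
apply/andP; split.
  by apply: le_trans h1; rewrite /= -L0 (L_mono nN) // ?x0I //; move: lI; rewrite in_itv /= => /andP[].
apply: lt_le_trans h2 _; rewrite /= -LN (L_mono nN) // ?xNI //; move: rI; rewrite in_itv /= => /andP[]. by [].
Qed.

Lemma S_other n m w x : (0 < N)%N -> (0 < n <= N)%N -> (0 < m <= N)%N -> m != n ->
  valid w -> x \in I -> S (n :: w) (L m x) -> x = xs N /\ (m < N)%N.
Proof.
move=> Npos nN mN mn vw xI /(S_sub Npos nN vw) /andP[h1 h2].
have := L_in mN xI; rewrite in_itv /= => /andP[h3 h4].
have [lt_mn|lt_nm] : (m < n)%N \/ (n < m)%N by move/eqP: mn; lia.
  have e : m = n.-1.
    apply: contrapT => e.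
    have : xs m < xs n.-1 by apply: xs_lt; apply/andP; split; lia.
    lra.
  have e2 : L m x = xs m.
    have : xs m <= xs n.-1 by apply: xs_le; apply/andP; split; lia.
    lra.
  have [_ [_ LN]] := HL mN.
  split; last by lia.
  by apply: (L_inj mN xI xNI); rewrite e2 LN.
exfalso.
have : xs n <= xs m.-1 by apply: xs_le; apply/andP; split; lia.
lra.
Qed.

Lemma find_n x : xs 0%N <= x < xs N -> exists2 n, (0 < n <= N)%N & xs n.-1 <= x < xs n.
Proof.
suff : forall j, (j <= N)%N -> xs 0%N <= x < xs j -> exists2 n, (0 < n <= j)%N & xs n.-1 <= x < xs n.
  move=> H /(H N (leqnn N)) [n nN h]; by exists n.
elim => [|j IH] jN /andP[h1 h2]; first by lra.
have [hj|hj] := leP (xs j) x.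
  by exists j.+1 => //=; apply/andP; split.
have [n nj h] := IH (ltnW jN) (introT andP (conj h1 hj)).
by exists n => //; lia.
Qed.

Lemma cyl_cover k x : (0 < N)%N -> xs 0%N <= x < xs N -> exists w, [/\ valid w, size w = k & S w x].
Proof.
move=> Npos; elim: k x => [|k IH] x hx; first by exists [::].
have [n nN /andP[h1 h2]] := find_n hx.
have [y yI Ly] : exists2 y, y \in I & L n y = x by apply: L_surj nN _; rewrite in_itv /= h1 ltW.
have yN : y != xs N.
  apply/eqP => e; have [_ [_ LN]] := HL nN; move: h2; rewrite -Ly e LN; lra.
have hy : xs 0%N <= y < xs N.
  by move: yI yN; rewrite in_itv /= => /andP[-> h] /eqP hn /=; rewrite lt_neqAle h andbT; apply/eqP.
have [w [vw sw Sw]] := IH y hy.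
exists (n :: w); split => //=; first by rewrite nN.
  by rewrite sw.
by rewrite -Ly; apply/S_cons.
Qed.


End Cyl.

Section Words.
Variable N : nat.
Fixpoint words k : seq (seq nat) :=
  if k is k'.+1 then [seq n :: w | n <- iota 1 N, w <- words k'] else [:: [::]].

Lemma words_mem k w : w \in words k <-> (valid N w /\ size w = k).
Proof.
elim: k w => [|k IH] w /=.
  by rewrite inE; split => [/eqP ->|[_]] //; case: w.
split.
  move/allpairsPdep => [n [w' [nI /IH [vw sw] ->]]] /=.
  by rewrite mem_iota in nI; rewrite /valid /= sw; split => //; apply/andP; split => //; lia.
case: w => [|n w] [] //= /andP[nN vw] [sw].
apply/allpairsPdep; exists n, w; split => //; first by rewrite mem_iota; lia.
by apply/IH.
Qed.

Lemma sum_words (R : comPzRingType) k (g : nat -> R) :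
  \sum_(w <- words k) \prod_(n <- w) g n = (\sum_(1 <= n < N.+1) g n) ^+ k.
Proof.
elim: k => [|k IH] /=; first by rewrite big_seq1 big_nil expr0.
rewrite big_allpairs_dep exprS -IH /index_iota subn1 /= big_distrl /=.
apply: eq_bigr => n _; rewrite big_distrr /=; apply: eq_bigr => w _.
by rewrite big_cons.
Qed.
End Words.

Lemma split_sum (V : nmodType) (M : nat) (F : nat -> V) n : (0 < n <= M)%N ->
  \sum_(1 <= m < M.+1) F m = \sum_(1 <= m < n) F m + F n + \sum_(n.+1 <= m < M.+1) F m.
Proof.
move=> /andP[n0 nM]; rewrite (big_cat_nat (n := n)) //; last by rewrite ltnW.
rewrite (big_cat_nat (m := n) (n := n.+1)) //=.
by rewrite big_nat1 addrA.
Qed.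

Lemma sum_single (V : nmodType) (M : nat) (F : nat -> V) n : (0 < n <= M)%N ->
  (forall m, (0 < m <= M)%N -> m != n -> F m = 0) ->
  \sum_(1 <= m < M.+1) F m = F n.
Proof.
move=> nM H; rewrite (split_sum F nM).
have h1 : \sum_(1 <= m < n) F m = 0.
  apply: big1_seq => m /andP[_]; rewrite mem_index_iota => /andP[m1 mn]; apply: H.
    by move: nM; lia.
  by move: nM; lia.
have h2 : \sum_(n.+1 <= m < M.+1) F m = 0.
  apply: big1_seq => m /andP[_]; rewrite mem_index_iota => /andP[m1 mn]; apply: H.
    by move: nM; lia.
  by move: nM; lia.
by rewrite h1 h2 add0r addr0.
Qed.

Lemma sum_ge0_nat (R : realDomainType) (a b : nat) (F : nat -> R) :
  (forall m, (a <= m < b)%N -> 0 <= F m) -> 0 <= \sum_(a <= m < b) F m.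
Proof.
move=> H; rewrite big_seq_cond sumr_ge0 // => m /andP[]; rewrite mem_index_iota => h _.
exact: H.
Qed.

Lemma term_le_sum (R : realDomainType) (M : nat) (F : nat -> R) n : (0 < n <= M)%N ->
  (forall m, (0 < m <= M)%N -> 0 <= F m) -> F n <= \sum_(1 <= m < M.+1) F m.
Proof.
move=> nM H; rewrite (split_sum F nM) -addrA addrC -addrA lerDl.
move/andP: nM => [n0 nM].
rewrite addr_ge0 //; apply: sum_ge0_nat => m /andP[h1 h2]; apply: H.
  by lia.
by lia.
Qed.

Section Meas.
Local Open Scope ereal_scope.
Variables (R : realType) (N : nat) (xs : nat -> R) (L : nat -> R -> R)
  (f : R -> KR R) (Om : nat -> R -> KR R -> KR R) (q : nat -> R)
  (mu : probability (borelRK R) R).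
Local Notation I := (`[xs 0%N, xs N]).
Local Notation G := (kgraph (xs 0%N) (xs N) f).
Hypothesis Hxs : forall i, (i < N)%N -> (xs i < xs i.+1)%R.
Hypothesis HL : forall n, (0 < n <= N)%N ->
     homeo_onto [set x | x \in I] [set x | x \in `[xs n.-1, xs n]] (L n)
     /\ L n (xs 0%N) = xs n.-1 /\ L n (xs N) = xs n.
Hypothesis mG : measurable (G : set (borelRK R)).
Hypothesis q0 : forall n, (0 < n <= N)%N -> (0 <= q n)%R.
Hypothesis q1 : (\sum_(1 <= n < N.+1) q n = 1)%R.
Hypothesis muG : mu G = 1.
Hypothesis Hinv : forall A : set (borelRK R), measurable A ->
     mu A = (\sum_(1 <= n < N.+1) (q n)%:E *
       mu [set z | G z /\ A (L n z.1, Om n z.1 z.2)])%E.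

Definition Gb : set (borelRK R) := G.
Definition hat (B : set R) : set (borelRK R) := [set z | B z.1].

Lemma Npos : (0 < N)%N.
Proof.
rewrite lt0n; apply/eqP => N0; move: q1; rewrite N0 big_geq // => /eqP.
by rewrite eq_sym oner_eq0.
Qed.

Lemma m_lt r : measurable (hat [set x | (x < r)%R]).
Proof. by apply: sub_sigma_algebra; exact: dopen_lt. Qed.
Lemma m_gt r : measurable (hat [set x | (r < x)%R]).
Proof. by apply: sub_sigma_algebra; exact: dopen_gt. Qed.

Lemma m_co l r : measurable (hat [set x | (l <= x < r)%R]).
Proof.
have -> : hat [set x | (l <= x < r)%R] = ~` hat [set x | (x < l)%R] `&` hat [set x | (x < r)%R].
  apply/seteqP; split => z /=; rewrite /hat /=.
    by move=> /andP[h1 h2]; split => //; rewrite ltNge h1.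
  by move=> [/negP]; rewrite -leNgt => -> ->.
by apply: measurableI; [apply: measurableC; exact: m_lt|exact: m_lt].
Qed.

Lemma m_pt c : measurable (hat [set x | x = c]).
Proof.
have -> : hat [set x | x = c] = ~` hat [set x | (x < c)%R] `&` ~` hat [set x | (c < x)%R].
  apply/seteqP; split => z /=; rewrite /hat /=.
    by move=> ->; rewrite ltxx.
  by move=> [/negP h1 /negP h2]; apply/eqP; rewrite eq_le -!leNgt in h1 h2 *; rewrite h1 h2.
by apply: measurableI; apply: measurableC; [exact: m_lt|exact: m_gt].
Qed.

Lemma m_cc l r : measurable (hat [set x | (l <= x <= r)%R]).
Proof.
have -> : hat [set x | (l <= x <= r)%R] = ~` hat [set x | (x < l)%R] `&` ~` hat [set x | (r < x)%R].
  apply/seteqP; split => z /=; rewrite /hat /=.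
    by move=> /andP[h1 h2]; split; rewrite ltNge ?h1 ?h2.
  by move=> [/negP h1 /negP h2]; rewrite -!leNgt in h1 h2 *; rewrite h1 h2.
by apply: measurableI; apply: measurableC; [exact: m_lt|exact: m_gt].
Qed.

Lemma mu_fine (X : set (borelRK R)) : measurable X -> mu X = (fine (mu X))%:E.
Proof. by move=> mX; rewrite fineK // fin_num_measure. Qed.

Lemma mfine_ge0 (X : set (borelRK R)) : (0 <= fine (mu X))%R.
Proof. by apply: fine_ge0; exact: measure_ge0. Qed.

Lemma mfine_le1 (X : set (borelRK R)) : measurable X -> (fine (mu X) <= 1)%R.
Proof. by move=> mX; rewrite -lee_fin -mu_fine // probability_le1. Qed.

Lemma muGI (X : set (borelRK R)) : measurable X -> mu (Gb `&` X) = mu X.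
Proof.
move=> mX; have mGX : measurable (Gb `&` X) by apply: measurableI.
apply/le_anti/andP; split; first by apply: le_measure; rewrite ?inE // => z [].
have mC : mu (~` Gb) = 0 by rewrite probability_setC // /Gb muG subee.
apply: (@le_trans _ _ (mu ((Gb `&` X) `|` ~` Gb))).
  apply: le_measure; rewrite ?inE //; first by apply: measurableU => //; apply: measurableC.
  by move=> z Xz; have [Gz|nGz] := pselect (Gb z); [left|right].
apply: le_trans (measureU2 _ mGX (measurableC mG)) _.
suff -> : mu (Gb `&` X) + mu (~` Gb) = mu (Gb `&` X) + 0 by rewrite adde0.
by congr (_ + _); exact: mC.
Qed.

Definition Bm (B : set R) m := [set x | x \in I /\ B (L m x)].

Lemma inv_hat (B : set R) : measurable (hat B) ->
  (forall m, (0 < m <= N)%N -> measurable (hat (Bm B m))) ->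
  mu (hat B) = \sum_(1 <= m < N.+1) (q m)%:E * mu (hat (Bm B m)).
Proof.
move=> mB mBm; rewrite Hinv //; rewrite big_nat_cond [RHS]big_nat_cond.
apply: eq_bigr => m /andP[/andP[m1 mN] _]; congr (_ * _).
have -> : [set z : borelRK R | G z /\ hat B (L m z.1, Om m z.1 z.2)] = Gb `&` hat (Bm B m).
  apply/seteqP; split => z /=.
    by move=> [[h1 h2] h3]; split => //; rewrite /hat /Bm /=.
  by move=> [[h1 h2] [h3 h4]].
by rewrite muGI //; apply: mBm; lia.
Qed.


Definition a := fine (mu (hat [set x | x = xs N])).

Lemma m0 : measurable (hat set0).
Proof. by have -> : hat set0 = set0 by apply/seteqP; split => z. Qed.

Lemma mu_hat0 : mu (hat set0) = 0.
Proof. by have -> : hat set0 = set0 by apply/seteqP; split => z. Qed.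

Lemma a_eq : (a = q N * a)%R.
Proof.
have NN : (0 < N <= N)%N by rewrite Npos leqnn.
have BN : Bm [set x | x = xs N] N = [set x | x = xs N].
  apply/seteqP; split => x /=.
    move=> [xI e]; apply: (L_inj HL NN xI (xNI Hxs)); rewrite e.
    by have [_ [_ ->]] := HL NN.
  by move=> ->; split; [exact: (xNI Hxs)|have [_ [_ ->]] := HL NN].
have Bm0 m : (0 < m <= N)%N -> m != N -> Bm [set x | x = xs N] m = set0.
  move=> mN mn; apply/seteqP; split => x //= [xI e].
  have := L_in HL mN xI; rewrite in_itv /= e => /andP[_ h].
  have : (xs m < xs N)%R by apply: (xs_lt Hxs); apply/andP; split => //; move/eqP: mn; lia.
  lra.
have mBm m : (0 < m <= N)%N -> measurable (hat (Bm [set x | x = xs N] m)).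
  move=> mN; have [->|mn] := eqVneq m N; first by rewrite BN; exact: m_pt.
  by rewrite Bm0 //; exact: m0.
have H := inv_hat (m_pt (xs N)) mBm.
rewrite (sum_single NN) in H; last by move=> m mN mn; rewrite Bm0 // mu_hat0 mule0.
rewrite BN (mu_fine (m_pt (xs N))) -EFinM in H.
by case: H.
Qed.

Lemma qN1 : q N = 1%R -> forall m, (0 < m < N)%N -> q m = 0%R.
Proof.
move=> qN m mN.
have E : (\sum_(1 <= i < N) q i = 0)%R.
  move: q1; rewrite big_nat_recr /=; last exact: Npos.
  by rewrite qN => /(congr1 (fun t => t - 1)%R); rewrite addrK subrr.
apply/le_anti/andP; split; last by apply: q0; lia.
have := @term_le_sum R N.-1 q m _ _; rewrite prednK ?Npos // E; apply; first lia.
by move=> i iN; apply: q0; move: iN Npos; lia.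
Qed.

Lemma a_cases : a = 0%R \/ q N = 1%R.
Proof.
have := a_eq; have [->|a0] := eqVneq a 0%R; first by left.
by move=> h; right; apply/eqP; rewrite -(can_eq (mulfK a0)) -h mul1r.
Qed.

Lemma mu_hatI : mu (hat [set x | x \in I]) = 1.
Proof.
have mI : measurable (hat [set x | x \in I]).
  have -> : hat [set x | x \in I] = hat [set x | (xs 0%N <= x <= xs N)%R].
    by apply/seteqP; split => z; rewrite /hat /= in_itv.
  exact: m_cc.
apply/le_anti/andP; split; first exact: probability_le1.
rewrite -muG; apply: le_measure; rewrite ?inE //.
by move=> z [].
Qed.

Local Notation Sw w := (S N xs L w).

Lemma mSw w : measurable (hat (Sw w)).
Proof. exact: m_co. Qed.

Lemma cyl_base : fine (mu (hat (Sw [::]))) = (1 - a)%R.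
Proof.
have E : hat [set x | x \in I] = hat (Sw [::]) `|` hat [set x | x = xs N].
  apply/seteqP; split => z; rewrite /hat /S /= in_itv /=.
    move=> /andP[h1 h2]; have [e|ne] := eqVneq z.1 (xs N); first by right.
    by left; rewrite h1 lt_neqAle ne h2.
  move=> [/andP[h1 h2]|->]; first by rewrite h1 ltW.
  by rewrite lexx (x0N Hxs).
have D : hat (Sw [::]) `&` hat [set x | x = xs N] = set0.
  apply/seteqP; split => z // [/=]; rewrite /hat /S /= => /andP[_ h] e.
  by move: h; rewrite e ltxx.
have H : mu (hat [set x | x \in I]) = mu (hat (Sw [::])) + mu (hat [set x | x = xs N]).
  by rewrite E; apply: measureU => //; [exact: mSw | exact: m_pt].
move: H; rewrite mu_hatI (mu_fine (mSw _)) (mu_fine (m_pt _)) -EFinD => -[].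
by rewrite /a => ->; rewrite addrK.
Qed.

Lemma Bm_same n w : (0 < n <= N)%N -> valid N w -> Bm (Sw (n :: w)) n = Sw w.
Proof.
move=> nN vw; have Np := Npos; apply/seteqP; split => x /=.
  by move=> [xI]; move/(S_cons Hxs HL Np nN vw xI).
move=> Sx; have xI : x \in I.
  have [lI rI _] := lrI Hxs HL Np vw.
  move: Sx lI rI; rewrite /S /= !in_itv /= => /andP[h1 h2] /andP[h3 _] /andP[_ h4].
  by rewrite (le_trans h3 h1) (le_trans (ltW h2) h4).
by split => //; apply/(S_cons Hxs HL Np nN vw xI).
Qed.

Lemma Bm_other n m w : (0 < n <= N)%N -> (0 < m <= N)%N -> m != n -> valid N w ->
  Bm (Sw (n :: w)) m = set0 \/
  (Bm (Sw (n :: w)) m = [set x | x = xs N] /\ (m < N)%N).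
Proof.
move=> nN mN mn vw; have Np := Npos.
have [h|h] := pselect (Sw (n :: w) (L m (xs N))).
  right; split; last by have [] := S_other Hxs HL Np nN mN mn vw (xNI Hxs) h.
  apply/seteqP; split => x /=.
    by move=> [xI Sx]; have [] := S_other Hxs HL Np nN mN mn vw xI Sx.
  by move=> ->; split => //; exact: (xNI Hxs).
left; apply/seteqP; split => x //= [xI Sx].
by have [e _] := S_other Hxs HL Np nN mN mn vw xI Sx; apply: h; rewrite -e.
Qed.

Lemma cyl w : valid N w -> fine (mu (hat (Sw w))) = ((1 - a) * \prod_(n <- w) q n)%R.
Proof.
elim: w => [|n w IH]; first by rewrite big_nil mulr1 cyl_base.
move=> /andP[nN vw].
have mBm m : (0 < m <= N)%N -> measurable (hat (Bm (Sw (n :: w)) m)).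
  move=> mN; have [->|mn] := eqVneq m n; first by rewrite Bm_same //; exact: mSw.
  by case: (Bm_other nN mN mn vw) => [->|[-> _]]; [exact: m0|exact: m_pt].
have H := inv_hat (mSw (n :: w)) mBm.
rewrite (sum_single nN) in H; last first.
  move=> m mN mn; case: (Bm_other nN mN mn vw) => [->|[-> mlt]].
    by rewrite mu_hat0 mule0.
  rewrite (mu_fine (m_pt _)) -/a; case: a_cases => [->|/qN1 qm].
    by rewrite mule0.
  by rewrite qm ?mul0e //; lia.
rewrite Bm_same // in H.
rewrite H (mu_fine (mSw _)) -EFinM /= IH // big_cons.
by rewrite mulrCA.
Qed.

End Meas.

Section Gen.
Local Open Scope ereal_scope.
Variables (R : realType) (d : measure_display) (T : measurableType d) (P : probability T R).

Lemma pfine (X : set T) : measurable X -> P X = (fine (P X))%:E.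
Proof. by move=> mX; rewrite fineK // fin_num_measure. Qed.

Lemma geo_le (rho : R) n : (0 <= rho < 1)%R -> (\sum_(0 <= k < n) rho ^+ k <= (1 - rho)^-1)%R.
Proof.
move=> /andP[r0 r1].
have h : ((1 - rho) * \sum_(0 <= k < n) rho ^+ k = 1 - rho ^+ n)%R.
  elim: n => [|n IH]; first by rewrite big_geq // mulr0 expr0 subrr.
  by rewrite big_nat_recr //= mulrDr IH exprS; ring.
have r0' : (0 < 1 - rho)%R by rewrite subr_gt0.
rewrite -(ler_pM2l r0') h mulfV ?gt_eqF // gerBl exprn_ge0 //.
Qed.

Lemma BC (F : nat -> set T) (rho : R) (X : set T) : (0 <= rho < 1)%R ->
  (forall k, measurable (F k)) -> (forall k, P (F k) <= (rho ^+ k)%:E) ->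
  measurable X -> X `<=` \bigcap_K \bigcup_(k in ~` `I_K) F k -> P X = 0.
Proof.
move=> rho01 mF PF mX XF.
have F0 k : 0 <= P (F k) by exact: measure_ge0.
have fin : \sum_(0 <= k <oo) P (F k) < +oo.
  apply: (@le_lt_trans _ _ ((1 - rho)^-1)%:E); last exact: ltry.
  apply: (@le_trans _ _ (\sum_(0 <= k <oo) (rho ^+ k)%:E)).
    by apply: lee_nneseries => // k _ _; exact: PF.
  apply: lime_le; first by apply: is_cvg_nneseries => k _ _; rewrite lee_fin exprn_ge0 //; case/andP: rho01.
  by apply: nearW => n /=; rewrite sumEFin lee_fin geo_le.
apply/eqP; rewrite -measure_le0.
have := nneseries_tail_cvg fin (fun k _ => F0 k).
move=> /cvge_to_ge; apply; apply: nearW => K.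
apply: measure_sigma_subadditive_tail => //.
by move=> x /XF; apply.
Qed.

Lemma sub_bigU (I : Type) (s : seq I) (Pr : pred I) (F : I -> set T) :
  (forall i, measurable (F i)) ->
  (fine (P (\big[setU/set0]_(i <- s | Pr i) F i)) <= \sum_(i <- s | Pr i) fine (P (F i)))%R.
Proof.
move=> mF; elim: s => [|i s IH]; first by rewrite !big_nil measure0.
rewrite !big_cons; case: (Pr i) => //.
have mU : measurable (\big[setU/set0]_(j <- s | Pr j) F j) by apply: bigsetU_measurable.
have h : P (F i `|` \big[setU/set0]_(j <- s | Pr j) F j) <=
   P (F i) + P (\big[setU/set0]_(j <- s | Pr j) F j) by apply: measureU2.
have mFU : measurable (F i `|` \big[setU/set0]_(j <- s | Pr j) F j) by apply: measurableU.
rewrite (pfine mFU) (pfine (mF i)) (pfine mU) -EFinD lee_fin in h.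
by apply: (le_trans h); rewrite lerD2l.
Qed.

Lemma in_bigU (I : eqType) (s : seq I) (Pr : pred I) (F : I -> set T) i z :
  i \in s -> Pr i -> F i z -> (\big[setU/set0]_(j <- s | Pr j) F j) z.
Proof.
elim: s => [|j s IH] //; rewrite inE big_cons => /orP[/eqP <-|iS] Pi Fz.
  by rewrite Pi; left.
by case: (Pr j); [right|]; apply: IH.
Qed.

End Gen.

Lemma filt_le (R : numDomainType) (I : Type) (s : seq I) (Pr : pred I) (G : I -> R) :
  (forall w, 0 <= G w) -> \sum_(w <- s | Pr w) G w <= \sum_(w <- s) G w.
Proof.
move=> G0; rewrite big_mkcond /=; apply: ler_sum => w _.
by case: (Pr w).
Qed.

Lemma rho_lt1 (R : realType) (N : nat) (p pt : nat -> R) :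
  (forall n, (0 < n <= N)%N -> 0 <= p n /\ 0 <= pt n) ->
  \sum_(1 <= n < N.+1) p n = 1 -> \sum_(1 <= n < N.+1) pt n = 1 ->
  (exists2 n, (0 < n <= N)%N & p n <> pt n) ->
  0 <= \sum_(1 <= n < N.+1) Num.sqrt (p n * pt n) < 1.
Proof.
move=> h0 s1 s2 [n0 n0N ne].
apply/andP; split; first by apply: sumr_ge0 => i _; exact: sqrtr_ge0.
set D := fun n => (Num.sqrt (p n) - Num.sqrt (pt n)) ^+ 2.
have key : \sum_(1 <= n < N.+1) D n = 2 - 2 * \sum_(1 <= n < N.+1) Num.sqrt (p n * pt n).
  have -> : \sum_(1 <= n < N.+1) D n =
     \sum_(1 <= n < N.+1) (p n + pt n - 2 * Num.sqrt (p n * pt n)).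
    rewrite big_nat_cond [RHS]big_nat_cond; apply: eq_bigr => n /andP[nN _].
    have nN' : (0 < n <= N)%N by lia.
    have [hp hq] := h0 n nN'.
    rewrite /D sqrtrM // sqrrB !sqr_sqrtr //; ring.
  by rewrite sumrB big_split /= s1 s2 mulr_sumr.
have Dpos : 0 < D n0.
  have [hp hq] := h0 n0 n0N.
  rewrite /D lt_neqAle sqr_ge0 andbT eq_sym sqrf_eq0 subr_eq0; apply/eqP => e; apply: ne.
  by rewrite -(sqr_sqrtr hp) -(sqr_sqrtr hq) e.
have : D n0 <= \sum_(1 <= n < N.+1) D n.
  by apply: term_le_sum => // m _; rewrite /D sqr_ge0.
rewrite key; lra.
Qed.

Section Core.
Local Open Scope ereal_scope.
Variables (R : realType) (N : nat) (xs : nat -> R) (L : nat -> R -> R)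
  (f : R -> KR R) (Om : nat -> R -> KR R -> KR R) (p pt : nat -> R)
  (mu nu : probability (borelRK R) R).
Local Notation I := (`[xs 0%N, xs N]).
Local Notation G := (kgraph (xs 0%N) (xs N) f).
Hypothesis Hxs : forall i, (i < N)%N -> (xs i < xs i.+1)%R.
Hypothesis HL : forall n, (0 < n <= N)%N ->
     homeo_onto [set x | x \in I] [set x | x \in `[xs n.-1, xs n]] (L n)
     /\ L n (xs 0%N) = xs n.-1 /\ L n (xs N) = xs n.
Hypothesis mG : measurable (G : set (borelRK R)).
Hypothesis p0 : forall n, (0 < n <= N)%N -> (0 <= p n)%R.
Hypothesis p1 : (\sum_(1 <= n < N.+1) p n = 1)%R.
Hypothesis pt0 : forall n, (0 < n <= N)%N -> (0 <= pt n)%R.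
Hypothesis pt1 : (\sum_(1 <= n < N.+1) pt n = 1)%R.
Hypothesis muG : mu G = 1.
Hypothesis nuG : nu G = 1.
Hypothesis Hmu : forall A : set (borelRK R), measurable A ->
     mu A = (\sum_(1 <= n < N.+1) (p n)%:E *
       mu [set z | G z /\ A (L n z.1, Om n z.1 z.2)])%E.
Hypothesis Hnu : forall A : set (borelRK R), measurable A ->
     nu A = (\sum_(1 <= n < N.+1) (pt n)%:E *
       nu [set z | G z /\ A (L n z.1, Om n z.1 z.2)])%E.
Hypothesis amu : a N xs mu = 0%R.
Let rho := (\sum_(1 <= n < N.+1) Num.sqrt (p n * pt n))%R.
Hypothesis rho01 : (0 <= rho < 1)%R.

Let Pw (w : seq nat) := (\prod_(n <- w) p n)%R.
Let Ptw (w : seq nat) := (\prod_(n <- w) pt n)%R.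
Let Qw (w : seq nat) := (\prod_(n <- w) Num.sqrt (p n * pt n))%R.

Lemma prod_ge0_valid (g : nat -> R) w : (forall n, (0 < n <= N)%N -> 0 <= g n)%R ->
  valid N w -> (0 <= \prod_(n <- w) g n)%R.
Proof.
move=> g0 vw; rewrite big_seq; apply: prodr_ge0 => n nw; apply: g0.
by move/allP: vw; apply.
Qed.

Lemma Qw_ge0 w : (0 <= Qw w)%R.
Proof. by rewrite /Qw; apply: prodr_ge0 => n _; exact: sqrtr_ge0. Qed.

Lemma Qw2 w : valid N w -> (Qw w ^+ 2 = Pw w * Ptw w)%R.
Proof.
move=> vw; rewrite /Qw /Pw /Ptw -prodrXl -big_split /=.
rewrite !big_seq; apply: eq_bigr => n nw.
have nN : (0 < n <= N)%N by move/allP: vw; apply.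
by rewrite sqr_sqrtr // mulr_ge0 ?p0 ?pt0.
Qed.

Lemma PQ w : valid N w -> (Pw w <= Ptw w)%R -> (Pw w <= Qw w)%R.
Proof.
move=> vw h; have P0 : (0 <= Pw w)%R by apply: prod_ge0_valid.
rewrite -ler_sqr ?nnegrE ?Qw_ge0 // Qw2 // expr2 ler_wpM2l //.
Qed.

Lemma PtQ w : valid N w -> (Ptw w <= Pw w)%R -> (Ptw w <= Qw w)%R.
Proof.
move=> vw h; have P0 : (0 <= Ptw w)%R by apply: prod_ge0_valid.
rewrite -ler_sqr ?nnegrE ?Qw_ge0 // Qw2 // expr2 [(Pw w * _)%R]mulrC ler_wpM2l //.
Qed.

Lemma sumQ k : (\sum_(w <- words N k) Qw w = rho ^+ k)%R.
Proof. exact: sum_words. Qed.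

Definition Ak k := \big[setU/set0]_(w <- words N k | (Pw w <= Ptw w)%R) hat (S N xs L w)
  `|` hat [set x | x = xs N].
Definition Bk k := \big[setU/set0]_(w <- words N k | ~~ (Pw w <= Ptw w)%R) hat (S N xs L w).

Lemma kSw w : measurable (hat (S N xs L w)).
Proof. exact: m_co. Qed.

Lemma mAk k : measurable (Ak k).
Proof. by apply: measurableU; [apply: bigsetU_measurable => w _; exact: kSw | exact: m_pt]. Qed.

Lemma mBk k : measurable (Bk k).
Proof. by apply: bigsetU_measurable => w _; exact: kSw. Qed.

Lemma muAk k : mu (Ak k) <= (rho ^+ k)%:E.
Proof.
set U := \big[setU/set0]_(w <- words N k | (Pw w <= Ptw w)%R) hat (S N xs L w).
have mU : measurable U by apply: bigsetU_measurable => w _; exact: kSw.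
have h : mu (U `|` hat [set x | x = xs N]) <= mu U + mu (hat [set x | x = xs N]).
  by apply: measureU2 => //; exact: m_pt.
apply: (le_trans h).
rewrite (pfine mu (m_pt _)) -/(a N xs mu) amu adde0 (pfine mu mU) lee_fin.
apply: (le_trans (sub_bigU _ _ _ (fun w => kSw w))).
rewrite -sumQ; apply: le_trans (filt_le _ _ Qw_ge0).
rewrite big_seq_cond [X in (_ <= X)%R]big_seq_cond; apply: ler_sum => w /andP[ws h1].
have [vw _] := (words_mem N k w).1 ws.
rewrite (cyl Hxs HL mG p0 p1 muG Hmu vw) amu subr0 mul1r.
exact: PQ.
Qed.

Lemma nuBk k : nu (Bk k) <= (rho ^+ k)%:E.
Proof.
rewrite (pfine nu (mBk k)) lee_fin.
apply: (le_trans (sub_bigU _ _ _ (fun w => kSw w))).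
rewrite -sumQ; apply: le_trans (filt_le _ _ Qw_ge0).
rewrite big_seq_cond [X in (_ <= X)%R]big_seq_cond; apply: ler_sum => w /andP[ws h1].
have [vw _] := (words_mem N k w).1 ws.
rewrite (cyl Hxs HL mG pt0 pt1 nuG Hnu vw).
have a0 : (0 <= a N xs nu)%R by apply: fine_ge0; exact: measure_ge0.
have a1 : (a N xs nu <= 1)%R.
  by rewrite -lee_fin /a -(pfine nu (m_pt _)) probability_le1 //; exact: m_pt.
have P0 : (0 <= Ptw w)%R by apply: prod_ge0_valid.
apply: (@le_trans _ _ (Ptw w)); first by rewrite -[X in (_ <= X)%R]mul1r ler_wpM2r //; lra.
by apply: PtQ => //; rewrite ltW // ltNge.
Qed.

Lemma cover_k k z : G z -> ~ Ak k z -> Bk k z.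
Proof.
move=> [zI _] nA.
have zN : z.1 != xs N by apply/eqP => e; apply: nA; right.
have hz : (xs 0%N <= z.1 < xs N)%R.
  by move: zI zN; rewrite in_itv /= => /andP[-> h] /= ne; rewrite lt_neqAle ne h.
have [w [vw sw Sw]] := cyl_cover Hxs HL k (Npos p1) hz.
have ws : w \in words N k by apply/words_mem.
have [h|h] := boolP (Pw w <= Ptw w)%R.
  by exfalso; apply: nA; left; apply: (in_bigU ws) => //.
exact: (in_bigU ws).
Qed.

Lemma core : exists2 A : set (borelRK R), measurable A & (mu A = 0 /\ nu (~` A) = 0).
Proof.
pose Gb : set (borelRK R) := G.
pose A := Gb `&` \bigcap_K \bigcup_(k in ~` `I_K) Ak k.
have mA : measurable A.
  apply: measurableI => //; apply: bigcapT_measurable => K.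
  by apply: bigcup_measurable => k _; exact: mAk.
exists A => //; split.
  apply: (BC rho01 mAk muAk mA) => z [_ h]; exact: h.
have nC : nu (~` Gb) = 0 by rewrite probability_setC // nuG subee.
pose X := Gb `&` ~` A.
have mX : measurable X by apply: measurableI => //; apply: measurableC.
have nX : nu X = 0.
  apply: (BC rho01 mBk nuBk mX) => z [Gz nAz] K _.
  have [K' hK'] : exists K', forall k, (K' <= k)%N -> ~ Ak k z.
    apply: contrapT => hn; apply: nAz; split => // K0 _.
    have [k [kK0 Akz]] : exists k, (K0 <= k)%N /\ Ak k z.
      apply: contrapT => hk; apply: hn; exists K0 => k kK Akz; apply: hk; by exists k.
    by exists k => //; move=> /= h; lia.
  exists (maxn K K'); first by move=> /= h; lia.
  by apply: cover_k => //; apply: hK'; rewrite leq_maxr.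
apply/eqP; rewrite -measure_le0.
apply: (@le_trans _ _ (nu (~` Gb `|` X))).
  apply: le_measure; rewrite ?inE //; first by apply: measurableC.
    by apply: measurableU => //; apply: measurableC.
  by move=> z nAz; have [Gz|nGz] := pselect (Gb z); [right|left].
apply: le_trans (measureU2 _ _ _) _; [exact: measurableC mG|exact: mX|].
suff -> : nu (~` Gb) + nu X = 0 + 0 by rewrite adde0.
by congr (_ + _).
Qed.

End Core.

Theorem theorem3p4 (R : realType) (N : nat) (xs : nat -> R)
  (Y : nat -> KR R) (L : nat -> R -> R) (gam : nat -> R)
  (Om : nat -> R -> KR R -> KR R) (phi : nat -> R -> R)
  (f : R -> KR R) (p pt : nat -> R)
  (mup mupt : probability (borelRK R) R) :
  (* partition a = x_0 < x_1 < ... < x_N = b of I = [a, b] *)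
  (forall i, (i < N)%N -> xs i < xs i.+1) ->
  (* the maps L_n *)
  (forall n, (0 < n <= N)%N ->
     homeo_onto [set x | x \in `[xs 0%N, xs N]] [set x | x \in `[xs n.-1, xs n]] (L n)
     /\ L n (xs 0%N) = xs n.-1 /\ L n (xs N) = xs n) ->
  (forall n, (0 < n <= N)%N -> 0 < gam n < 1 /\
     forall x y, x \in `[xs 0%N, xs N] -> y \in `[xs 0%N, xs N] ->
       `|L n x - L n y| <= gam n * `|x - y|) ->
  (* the maps Omega_n *)
  (forall n, (0 < n <= N)%N ->
     dcontinuous_on [set z | z.1 \in `[xs 0%N, xs N]] (Om n)
     /\ Om n (xs 0%N) (Y 0%N) = Y n.-1 /\ Om n (xs N) (Y N) = Y n) ->
  (forall n, (0 < n <= N)%N ->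
     forall x (Y1 Y2 : KR R), x \in `[xs 0%N, xs N] ->
       hausdorff (Om n x Y1) (Om n x Y2) <= phi n (hausdorff Y1 Y2)) ->
  (* the functions phi_n : R_+ -> R_+ *)
  (forall n, (0 < n <= N)%N ->
     [/\ (forall t, 0 <= t -> 0 <= phi n t),
         (forall s t, 0 <= s -> s <= t -> phi n s <= phi n t),
         (forall t, 0 < t -> phi n t / t < 1) &
         (forall s t, 0 < s -> s <= t -> phi n t / t <= phi n s / s)]) ->
  (* f is the continuous fractal function of the IFS *)
  kcontinuous_on [set x | x \in `[xs 0%N, xs N]] f ->
  (forall i, (i <= N)%N -> f (xs i) = Y i) ->
  (forall n, (0 < n <= N)%N -> forall y, y \in `[xs n.-1, xs n] ->
     forall x, x \in `[xs 0%N, xs N] -> L n x = y -> f y = Om n x (f x)) ->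
  (* p, pt are distinct probability vectors *)
  (forall n, (0 < n <= N)%N -> 0 <= p n /\ 0 <= pt n) ->
  \sum_(1 <= n < N.+1) p n = 1 ->
  \sum_(1 <= n < N.+1) pt n = 1 ->
  (exists2 n, (0 < n <= N)%N & p n <> pt n) ->
  (* mu_p, mu_pt are Borel probability measures on G_*(f), invariant *)
  mup (kgraph (xs 0%N) (xs N) f) = 1%E ->
  mupt (kgraph (xs 0%N) (xs N) f) = 1%E ->
  (forall A : set (borelRK R), measurable A ->
     mup A = (\sum_(1 <= n < N.+1) (p n)%:E *
       mup [set z | kgraph (xs 0%N) (xs N) f z /\ A (L n z.1, Om n z.1 z.2)])%E) ->
  (forall A : set (borelRK R), measurable A ->
     mupt A = (\sum_(1 <= n < N.+1) (pt n)%:E *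
       mupt [set z | kgraph (xs 0%N) (xs N) f z /\ A (L n z.1, Om n z.1 z.2)])%E) ->
  mutually_singular mup mupt.
Proof.
move=> Hxs HL _ _ _ _ fc _ _ ppt p1 pt1 ne muG nuG Hmu Hnu.
have mG : measurable (kgraph (xs 0%N) (xs N) f : set (borelRK R)).
  rewrite -(setCK (kgraph _ _ _)); apply: measurableC; apply: sub_sigma_algebra.
  exact: G_dopenC fc.
have p0 n : (0 < n <= N)%N -> 0 <= p n by move=> h; case: (ppt n h).
have pt0 n : (0 < n <= N)%N -> 0 <= pt n by move=> h; case: (ppt n h).
have rho01 := rho_lt1 ppt p1 pt1 ne.
case: (a_cases Hxs HL mG p1 muG Hmu) => [a0|pN].
  exact: (core Hxs HL mG p0 p1 pt0 pt1 muG nuG Hmu Hnu a0 rho01).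
case: (a_cases Hxs HL mG pt1 nuG Hnu) => [a0|ptN].
  have ppt'' n : (0 < n <= N)%N -> 0 <= pt n /\ 0 <= p n by move=> h; case: (ppt n h).
  have ne'' : exists2 n, (0 < n <= N)%N & pt n <> p n.
    by case: ne => n h1 h2; exists n => // e; apply: h2.
  have rho' := rho_lt1 ppt'' pt1 p1 ne''.
  have [A mA [h1 h2]] := core Hxs HL mG pt0 pt1 p0 p1 nuG muG Hnu Hmu a0 rho'.
  exists (~` A); first exact: measurableC.
  by split => //; rewrite setCK.
exfalso; case: ne => n nN; apply.
have [->|nlt] : n = N \/ (n < N)%N by lia.
  by rewrite pN ptN.
by rewrite (qN1 p0 p1 pN) ?(qN1 pt0 pt1 ptN) //; lia.
Qed.
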